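(* For $\epsilon>0$ sufficiently small, $R_\pi^\natural(S^1\times D^2,A_1)$ is homeomorphic to $S^2$. Explicitly, with $(\phi,\theta)$, $\phi\in[0,\pi]$, $\theta\in[0,2\pi]$, spherical-polar coordinates on $S^2$ and $\nu=\epsilon\sin\phi$, the map sending $(\phi,\theta)$ to the class of $$a=i\sigma_z,\qquad h=(\cos^2\nu+\sin^2\nu\sin^2\theta)^{-1/2}\big(i\sigma_x\cos\nu-i\sigma_z\sin\nu\sin\theta\big),$$ $$A=h\big(\cos\phi+i\sin\phi(\sigma_x\cos\theta+\sigma_y\sin\theta)\big),\qquad B=\cos\nu+i\sin\nu(\sigma_x\cos\theta+\sigma_y\sin\theta),$$ $$b=-ha^{-1}h^{-1},\qquad w=-1,$$ is a well-defined homeomorphism $S^2\to R_\pi^\natural(S^1\times D^2,A_1)$.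
   Context: Pauli matrices standard; $\hat r\cdot\vec\sigma=r_x\sigma_x+r_y\sigma_y+r_z\sigma_z$. Fix $\epsilon>0$. $R_\pi^\natural(S^1\times D^2,A_1)$ is the holonomy-perturbed traceless character variety of a solid torus containing an unknotted arc $A_1$, a meridional loop $H$ around it, an arc $W$ from $A_1$ to $H$, and a perturbation loop $P$; the fundamental group of the complement is $\langle A,B,a,b,h,w\mid hwaB=aBh,\ b=ha^{-1}w^{-1}h^{-1}\rangle$, and the longitude and meridian of a tubular neighborhood of $P$ are $\lambda_P=h^{-1}A$ and $\mu_P=B$. Concretely, $R_\pi^\natural(S^1\times D^2,A_1)$ is the space of tuples $(A,B,a,b,h,w)\in SU(2)^6$ with $\operatorname{tr}a=\operatorname{tr}h=0$, $w=-1$, $hwaB=aBh$, $b=ha^{-1}w^{-1}h^{-1}$, and such that whenever $h^{-1}A=\cos\phi+i\sin\phi\,\hat r\cdot\vec\sigma$ with $\phi\in\mathbb{R}$, $\hat r\in S^2$, one has $B=\cos\nu+i\sin\nu\,\hat r\cdot\vec\sigma$ with $\nu=\epsilon\sin\phi$; modulo simultaneous conjugation, with the quotient topology. *)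

(* Defs.v *)
From Stdlib Require Import Reals.
Open Scope R_scope.

(* An element  q0 * 1 + i (q1 sigma_x + q2 sigma_y + q3 sigma_z)  of the real
   span of 1, i sigma_x, i sigma_y, i sigma_z (Pauli matrices standard).
   SU(2) is exactly the set of such matrices with q0^2+q1^2+q2^2+q3^2 = 1,
   and the matrix product is given by
   (a0 + i a.s)(b0 + i b.s) = (a0 b0 - a.b) + i (a0 b + b0 a - a x b).s *)
Record quat := Qt { q0 : R; q1 : R; q2 : R; q3 : R }.

Definition qmul (a b : quat) : quat :=
  Qt (q0 a * q0 b - (q1 a * q1 b + q2 a * q2 b + q3 a * q3 b))
     (q0 a * q1 b + q0 b * q1 a - (q2 a * q3 b - q3 a * q2 b))
     (q0 a * q2 b + q0 b * q2 a - (q3 a * q1 b - q1 a * q3 b))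
     (q0 a * q3 b + q0 b * q3 a - (q1 a * q2 b - q2 a * q1 b)).

Definition qnorm2 (a : quat) : R := q0 a ^ 2 + q1 a ^ 2 + q2 a ^ 2 + q3 a ^ 2.

(* matrix inverse (adjugate / determinant; determinant = qnorm2) *)
Definition qinv (a : quat) : quat :=
  Qt (q0 a / qnorm2 a) (- q1 a / qnorm2 a) (- q2 a / qnorm2 a) (- q3 a / qnorm2 a).

Definition qopp (a : quat) : quat := Qt (- q0 a) (- q1 a) (- q2 a) (- q3 a).

Definition qone : quat := Qt 1 0 0 0.

Definition in_SU2 (a : quat) : Prop := qnorm2 a = 1.

(* trace of q0 + i q.sigma is 2 q0 *)
Definition qtrace (a : quat) : R := 2 * q0 a.

Definition qexp (t r0 r1 r2 : R) : quat :=
  Qt (cos t) (sin t * r0) (sin t * r1) (sin t * r2).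

Record rep := Rep { rA : quat; rB : quat; ra : quat; rb : quat; rh : quat; rw : quat }.

(* the (unquotiented) set defining R_pi^natural(S^1 x D^2, A_1) *)
Definition in_Rset (eps : R) (x : rep) : Prop :=
  in_SU2 (rA x) /\ in_SU2 (rB x) /\ in_SU2 (ra x) /\ in_SU2 (rb x) /\
  in_SU2 (rh x) /\ in_SU2 (rw x) /\
  qtrace (ra x) = 0 /\ qtrace (rh x) = 0 /\
  rw x = qopp qone /\
  qmul (qmul (qmul (rh x) (rw x)) (ra x)) (rB x) = qmul (qmul (ra x) (rB x)) (rh x) /\
  rb x = qmul (qmul (qmul (rh x) (qinv (ra x))) (qinv (rw x))) (qinv (rh x)) /\
  (forall phi r0 r1 r2 : R, r0 ^ 2 + r1 ^ 2 + r2 ^ 2 = 1 ->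
     qmul (qinv (rh x)) (rA x) = qexp phi r0 r1 r2 ->
     rB x = qexp (eps * sin phi) r0 r1 r2).

Definition qconj (g a : quat) : quat := qmul (qmul g a) (qinv g).

Definition rep_conj (x y : rep) : Prop :=
  exists g : quat, in_SU2 g /\
    rA y = qconj g (rA x) /\ rB y = qconj g (rB x) /\ ra y = qconj g (ra x) /\
    rb y = qconj g (rb x) /\ rh y = qconj g (rh x) /\ rw y = qconj g (rw x).

Definition qdist2 (a b : quat) : R :=
  (q0 a - q0 b) ^ 2 + (q1 a - q1 b) ^ 2 + (q2 a - q2 b) ^ 2 + (q3 a - q3 b) ^ 2.

Definition rep_dist (x y : rep) : R :=
  sqrt (qdist2 (rA x) (rA y) + qdist2 (rB x) (rB y) + qdist2 (ra x) (ra y) +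
        qdist2 (rb x) (rb y) + qdist2 (rh x) (rh y) + qdist2 (rw x) (rw y)).

Definition pt3 : Type := (R * R * R)%type.

Definition dist3 (p q : pt3) : R :=
  let '(x1, y1, z1) := p in let '(x2, y2, z2) := q in
  sqrt ((x1 - x2) ^ 2 + (y1 - y2) ^ 2 + (z1 - z2) ^ 2).

Definition in_S2 (p : pt3) : Prop :=
  let '(x, y, z) := p in x ^ 2 + y ^ 2 + z ^ 2 = 1.

Definition open_in {T : Type} (d : T -> T -> R) (S U : T -> Prop) : Prop :=
  forall x, S x -> U x -> exists delta, delta > 0 /\
    forall y, S y -> d x y < delta -> U y.

(* subsets of the set X saturated w.r.t. the equivalence relation E:
   these are exactly the preimages of subsets of the quotient X/E *)
Definition saturated {T : Type} (X : T -> Prop) (E : T -> T -> Prop) (W : T -> Prop) : Prop :=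
  forall x y, X x -> X y -> E x y -> W x -> W y.

Definition sph (phi theta : R) : pt3 :=
  (sin phi * cos theta, sin phi * sin theta, cos phi).

Definition in_coord_range (phi theta : R) : Prop :=
  0 <= phi <= PI /\ 0 <= theta <= 2 * PI.

Definition param (eps phi theta : R) : rep :=
  let nu := eps * sin phi in
  let c := sqrt (cos nu ^ 2 + sin nu ^ 2 * sin theta ^ 2) in
  let a := Qt 0 0 0 1 in
  let h := Qt 0 (cos nu / c) 0 (- (sin nu * sin theta) / c) in
  let A := qmul h (Qt (cos phi) (sin phi * cos theta) (sin phi * sin theta) 0) in
  let B := Qt (cos nu) (sin nu * cos theta) (sin nu * sin theta) 0 in
  let b := qopp (qmul (qmul h (qinv a)) (qinv h)) in
  let w := qopp qone in
  Rep A B a b h w.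

(* Main.v *)
Require Import Defs.
From Stdlib Require Import Reals Lra Psatz.
Open Scope R_scope.

Lemma quat_ext : forall a b : quat, q0 a = q0 b -> q1 a = q1 b -> q2 a = q2 b -> q3 a = q3 b -> a = b.
Proof. intros [] [] ; simpl; intros; subst; reflexivity. Qed.

Ltac qext := apply quat_ext; simpl.
Ltac nzt := match goal with H : ?a <> 0 |- ?b <> 0 => let E := fresh in intro E; apply H; transitivity b; [ring|exact E] end.

Lemma qmul_assoc a b c : qmul (qmul a b) c = qmul a (qmul b c).
Proof. destruct a, b, c; qext; ring. Qed.

Lemma qnorm2_mul a b : qnorm2 (qmul a b) = qnorm2 a * qnorm2 b.
Proof. destruct a, b; unfold qnorm2; simpl; ring. Qed.

Lemma qinv_r g : qnorm2 g <> 0 -> qmul g (qinv g) = qone.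
Proof. destruct g as [x y z t]; unfold qinv, qnorm2; simpl; intro H. qext; field; nzt. Qed.

Lemma qinv_l g : qnorm2 g <> 0 -> qmul (qinv g) g = qone.
Proof. destruct g as [x y z t]; unfold qinv, qnorm2; simpl; intro H. qext; field; nzt. Qed.

Lemma qmul_one_l a : qmul qone a = a.
Proof. destruct a; qext; ring. Qed.
Lemma qmul_one_r a : qmul a qone = a.
Proof. destruct a; qext; ring. Qed.

Lemma qnorm2_qinv g : qnorm2 g <> 0 -> qnorm2 (qinv g) = / qnorm2 g.
Proof. destruct g as [x y z t]; unfold qinv, qnorm2; simpl; intro H. field; nzt. Qed.

Lemma qnorm2_ge0 g : 0 <= qnorm2 g.
Proof. destruct g; unfold qnorm2; simpl; nra. Qed.

Lemma qinv_unique z y : qmul z y = qone -> qnorm2 y <> 0 -> z = qinv y.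
Proof. intros H Hy. rewrite <- (qmul_one_r z), <- (qinv_r y Hy), <- qmul_assoc, H, qmul_one_l. reflexivity. Qed.

Lemma qconj_mul g x y : qnorm2 g <> 0 -> qconj g (qmul x y) = qmul (qconj g x) (qconj g y).
Proof. intro Hg. unfold qconj. rewrite !qmul_assoc.
  rewrite <- (qmul_assoc (qinv g) g), qinv_l, qmul_one_l by exact Hg. reflexivity. Qed.

Lemma qnorm2_conj g x : qnorm2 g <> 0 -> qnorm2 (qconj g x) = qnorm2 x.
Proof. intro Hg. unfold qconj. rewrite !qnorm2_mul, qnorm2_qinv by exact Hg. field. exact Hg. Qed.

Lemma q0_conj g x : qnorm2 g <> 0 -> q0 (qconj g x) = q0 x.
Proof. destruct g as [a b c d], x; unfold qconj, qinv, qnorm2; simpl; intro H. field; nzt. Qed.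

Lemma qconj_scalar g c : qnorm2 g <> 0 -> qconj g (Qt c 0 0 0) = Qt c 0 0 0.
Proof. destruct g as [a b d e]; unfold qconj, qinv, qnorm2; simpl; intro H. qext; field; nzt. Qed.

Lemma qconj_inv g x : qnorm2 g <> 0 -> qnorm2 x <> 0 -> qconj g (qinv x) = qinv (qconj g x).
Proof. intros Hg Hx. apply qinv_unique.
  - rewrite <- qconj_mul by exact Hg. rewrite qinv_l by exact Hx. apply qconj_scalar; exact Hg.
  - rewrite qnorm2_conj; assumption. Qed.

Lemma qinv_mul a b : qnorm2 a <> 0 -> qnorm2 b <> 0 -> qinv (qmul a b) = qmul (qinv b) (qinv a).
Proof. intros Ha Hb. symmetry. apply qinv_unique.
  - rewrite !qmul_assoc. rewrite <- (qmul_assoc (qinv a) a), qinv_l, qmul_one_l by exact Ha. apply qinv_l; exact Hb.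
  - rewrite qnorm2_mul. apply Rmult_integral_contrapositive; auto. Qed.

Lemma qconj_comp g2 g1 x : qnorm2 g1 <> 0 -> qnorm2 g2 <> 0 -> qconj (qmul g2 g1) x = qconj g2 (qconj g1 x).
Proof. intros H1 H2. unfold qconj. rewrite qinv_mul by assumption. rewrite !qmul_assoc. reflexivity. Qed.

Definition qsc (s : R) (g : quat) : quat := Qt (s * q0 g) (s * q1 g) (s * q2 g) (s * q3 g).
Definition qadd (a b : quat) : quat := Qt (q0 a + q0 b) (q1 a + q1 b) (q2 a + q2 b) (q3 a + q3 b).

Lemma qconj_sc s g x : s <> 0 -> qnorm2 g <> 0 -> qconj (qsc s g) x = qconj g x.
Proof. destruct g as [a b c d], x; unfold qconj, qsc, qinv, qnorm2; simpl; intros Hs H. qext; field; (split; [nzt | let E := fresh in intro E; assert (E2: (s*s)*(a*a+b*b+c*c+d*d) = 0) by (rewrite <- E; ring); apply Rmult_integral in E2; destruct E2 as [E2|E2]; [apply Hs; nra | apply H; rewrite <- E2; ring]]). Qed.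

Lemma qconj_add g x y : qnorm2 g <> 0 -> qconj g (qadd x y) = qadd (qconj g x) (qconj g y).
Proof. destruct g as [a b c d], x, y; unfold qconj, qadd, qinv, qnorm2; simpl; intros H. qext; field; nzt. Qed.

Lemma qconj_scm g s x : qnorm2 g <> 0 -> qconj g (qsc s x) = qsc s (qconj g x).
Proof. destruct g as [a b c d], x; unfold qconj, qsc, qinv, qnorm2; simpl; intros H. qext; field; nzt. Qed.

Lemma qconj_qexp g c s r0 r1 r2 : qnorm2 g <> 0 ->
  qconj g (Qt c (s*r0) (s*r1) (s*r2)) =
  Qt c (s * q1 (qconj g (Qt 0 r0 r1 r2))) (s * q2 (qconj g (Qt 0 r0 r1 r2))) (s * q3 (qconj g (Qt 0 r0 r1 r2))).
Proof. destruct g as [a b d e]; unfold qconj, qinv, qnorm2; simpl; intros H. qext; field; nzt. Qed.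

Lemma qconj_opp g x : qnorm2 g <> 0 -> qconj g (qopp x) = qopp (qconj g x).
Proof. destruct g as [a b d e], x; unfold qconj, qopp, qinv, qnorm2; simpl; intros H. qext; field; nzt. Qed.

Lemma qone_n : qnorm2 qone = 1.
Proof. unfold qnorm2; simpl; ring. Qed.

Lemma qconj_one x : qconj qone x = x.
Proof. destruct x; unfold qconj, qinv, qnorm2; simpl; qext; field. Qed.

Lemma qinv_n g : qnorm2 g <> 0 -> qnorm2 (qinv g) <> 0.
Proof. intro H; rewrite qnorm2_qinv by exact H; apply Rinv_neq_0_compat; exact H. Qed.

Lemma qconj_back g x : qnorm2 g <> 0 -> qconj g (qconj (qinv g) x) = x.
Proof. intro H. rewrite <- qconj_comp by (auto using qinv_n). rewrite qinv_r by exact H. apply qconj_one. Qed.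
Lemma qconj_back' g x : qnorm2 g <> 0 -> qconj (qinv g) (qconj g x) = x.
Proof. intro H. rewrite <- qconj_comp by (auto using qinv_n). rewrite qinv_l by exact H. apply qconj_one. Qed.

Definition conjmap (g : quat) (x : rep) : rep :=
  Rep (qconj g (rA x)) (qconj g (rB x)) (qconj g (ra x)) (qconj g (rb x)) (qconj g (rh x)) (qconj g (rw x)).

Lemma qone_eq : qone = Qt 1 0 0 0. Proof. reflexivity. Qed.

Lemma su2_nz a : in_SU2 a -> qnorm2 a <> 0.
Proof. unfold in_SU2; intro H; rewrite H; lra. Qed.

Lemma Rset_conj eps x g : in_Rset eps x -> qnorm2 g <> 0 -> in_Rset eps (conjmap g x).
Proof.
  intros [HA [HB [Ha [Hb [Hh [Hw [Hta [Hth [Hw1 [Hrel [Hbe Hpert]]]]]]]]]]] Hg.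
  unfold in_Rset, conjmap, in_SU2, qtrace in *; cbn [rA rB ra rb rh rw].
  rewrite !qnorm2_conj, !q0_conj by exact Hg.
  repeat split; auto.
  - rewrite Hw1, qconj_opp, qone_eq, qconj_scalar by exact Hg. reflexivity.
  - rewrite <- !qconj_mul by exact Hg. rewrite Hrel. reflexivity.
  - rewrite Hbe. rewrite !qconj_mul by exact Hg.
    rewrite !qconj_inv by (auto using su2_nz). reflexivity.
  - intros phi r0 r1 r2 Hr HQ.
    assert (HQ' : qconj g (qmul (qinv (rh x)) (rA x)) = qexp phi r0 r1 r2).
    { rewrite qconj_mul, qconj_inv by (auto using su2_nz). exact HQ. }
    set (p := qconj (qinv g) (Qt 0 r0 r1 r2)).
    assert (Hp0 : q0 p = 0). { unfold p. rewrite q0_conj by (auto using qinv_n). reflexivity. }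
    assert (Hpn : q1 p ^ 2 + q2 p ^ 2 + q3 p ^ 2 = 1).
    { assert (E := qnorm2_conj (qinv g) (Qt 0 r0 r1 r2) (qinv_n g Hg)). fold p in E.
      unfold qnorm2 in E; cbn [q0 q1 q2 q3] in E. rewrite Hp0 in E. lra. }
    assert (HQ2 : qmul (qinv (rh x)) (rA x) = qexp phi (q1 p) (q2 p) (q3 p)).
    { rewrite <- (qconj_back' g (qmul (qinv (rh x)) (rA x))) by exact Hg. rewrite HQ'.
      unfold qexp. rewrite qconj_qexp by (auto using qinv_n). reflexivity. }
    rewrite (Hpert phi _ _ _ Hpn HQ2). unfold qexp.
    rewrite qconj_qexp by exact Hg.
    assert (Ep : Qt 0 (q1 p) (q2 p) (q3 p) = p). { destruct p; simpl in *; subst; reflexivity. }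
    rewrite Ep. unfold p. rewrite qconj_back by exact Hg. reflexivity.
Qed.

Lemma rep_conj_trans x y z : rep_conj x y -> rep_conj y z -> rep_conj x z.
Proof.
  intros [g1 [H1 [E1 [E2 [E3 [E4 [E5 E6]]]]]]] [g2 [H2 [F1 [F2 [F3 [F4 [F5 F6]]]]]]].
  exists (qmul g2 g1). split.
  - unfold in_SU2 in *. rewrite qnorm2_mul, H1, H2; ring.
  - rewrite !qconj_comp by (auto using su2_nz).
    rewrite F1, F2, F3, F4, F5, F6, E1, E2, E3, E4, E5, E6. repeat split.
Qed.

Lemma qnorm2_sc s g : qnorm2 (qsc s g) = s^2 * qnorm2 g.
Proof. destruct g; unfold qnorm2, qsc; simpl; ring. Qed.

Lemma rep_conj_of x g : qnorm2 g <> 0 -> rep_conj x (conjmap g x).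
Proof.
  intro Hg. assert (Hpos : 0 < qnorm2 g) by (pose proof (qnorm2_ge0 g); lra).
  exists (qsc (/ sqrt (qnorm2 g)) g). split.
  - unfold in_SU2. rewrite qnorm2_sc.
    assert (Hs : 0 < sqrt (qnorm2 g)) by (apply sqrt_lt_R0; lra).
    assert (Hs2 := sqrt_sqrt (qnorm2 g) ltac:(lra)).
    rewrite <- Hs2 at 2. field. lra.
  - assert (Hs : / sqrt (qnorm2 g) <> 0) by (apply Rinv_neq_0_compat; apply Rgt_not_eq, sqrt_lt_R0; lra).
    unfold conjmap; cbn [rA rB ra rb rh rw]. rewrite !qconj_sc by assumption. repeat split.
Qed.

Lemma rep_conj_refl x : rep_conj x x.
Proof. exists qone. split. apply qone_n. rewrite !qconj_one. repeat split. Qed.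

Lemma angle c s : c^2 + s^2 = 1 -> exists th, 0 <= th <= 2*PI /\ cos th = c /\ sin th = s /\ (0 <= s -> th <= PI).
Proof.
  intro H. assert (Hc : -1 <= c <= 1) by nra.
  pose proof (acos_bound c) as Hb. pose proof (cos_acos c Hc) as Hca. pose proof (sin_acos c Hc) as Hsa.
  assert (Hsq : sqrt (1 - c²) = Rabs s).
  { rewrite <- sqrt_Rsqr_abs. f_equal. unfold Rsqr. nra. }
  destruct (Rle_or_lt 0 s) as [Hs|Hs].
  - exists (acos c). rewrite Hsq, Rabs_right in Hsa by lra. pose proof PI_RGT_0. repeat split; lra.
  - exists (2*PI - acos c). rewrite Hsq, Rabs_left in Hsa by lra. pose proof PI_RGT_0.
    rewrite cos_minus, sin_minus, cos_2PI, sin_2PI, Hca, Hsa. repeat split; try lra.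
Qed.

Lemma sin_nonneg_range phi : 0 <= phi <= PI -> 0 <= sin phi.
Proof. intro; apply sin_ge_0; lra. Qed.

Lemma cos_pos_small x : 0 <= x < 1 -> 0 < cos x.
Proof. intro H. pose proof PI2_1. apply cos_gt_0; lra. Qed.

Lemma sin_pos_small x : 0 < x < 1 -> 0 < sin x.
Proof. intro H. pose proof PI2_1. apply sin_gt_0; lra. Qed.

Definition QP (phi theta : R) : quat := Qt (cos phi) (sin phi * cos theta) (sin phi * sin theta) 0.
Definition kq : quat := Qt 0 0 0 1.
Definition hP (eps phi theta : R) : quat := rh (param eps phi theta).

Lemma param_eq eps phi theta : param eps phi theta =
  Rep (qmul (hP eps phi theta) (QP phi theta))
      (Qt (cos (eps * sin phi)) (sin (eps * sin phi) * cos theta) (sin (eps * sin phi) * sin theta) 0)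
      kq (qopp (qmul (qmul (hP eps phi theta) (qinv kq)) (qinv (hP eps phi theta))))
      (hP eps phi theta) (qopp qone).
Proof. reflexivity. Qed.

Definition Cc (eps phi theta : R) := sqrt (cos (eps * sin phi) ^ 2 + sin (eps * sin phi) ^ 2 * sin theta ^ 2).

Lemma hP_eq eps phi theta : hP eps phi theta =
  Qt 0 (cos (eps * sin phi) / Cc eps phi theta) 0 (- (sin (eps * sin phi) * sin theta) / Cc eps phi theta).
Proof. reflexivity. Qed.

Section P.
Variables eps phi theta : R.
Hypothesis Heps : 0 < eps < 1.
Hypothesis Hphi : 0 <= phi <= PI.

Lemma nu_range : 0 <= eps * sin phi < 1.
Proof. pose proof (sin_nonneg_range phi Hphi). pose proof (SIN_bound phi). nra. Qed.

Lemma cn_pos : 0 < cos (eps * sin phi).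
Proof. apply cos_pos_small, nu_range. Qed.

Lemma Cc_pos : 0 < Cc eps phi theta.
Proof. unfold Cc. apply sqrt_lt_R0. pose proof cn_pos. nra. Qed.

Lemma Cc_sq : Cc eps phi theta ^ 2 = cos (eps * sin phi) ^ 2 + sin (eps * sin phi) ^ 2 * sin theta ^ 2.
Proof. unfold Cc. rewrite <- Rsqr_pow2. apply Rsqr_sqrt. pose proof cn_pos. nra. Qed.

Lemma hP_n : qnorm2 (hP eps phi theta) = 1.
Proof. rewrite hP_eq. unfold qnorm2; simpl. pose proof Cc_pos. pose proof Cc_sq.
  transitivity ((cos (eps * sin phi) ^ 2 + sin (eps * sin phi) ^ 2 * sin theta ^ 2) / Cc eps phi theta ^ 2). field; lra. rewrite <- H0; field; lra. Qed.

Lemma hP_x_pos : 0 < q1 (hP eps phi theta).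
Proof. rewrite hP_eq. simpl. pose proof Cc_pos. pose proof cn_pos. apply Rdiv_lt_0_compat; lra. Qed.

End P.

Lemma qnorm2_opp x : qnorm2 (qopp x) = qnorm2 x.
Proof. destruct x; unfold qnorm2; simpl; ring. Qed.
Lemma kq_n : qnorm2 kq = 1. Proof. unfold qnorm2; simpl; ring. Qed.
Lemma qinv_mone : qinv (qopp qone) = qopp qone.
Proof. unfold qinv, qnorm2; simpl; qext; field. Qed.
Lemma qmul_mone_r x : qmul x (qopp qone) = qopp x.
Proof. destruct x; qext; ring. Qed.
Lemma qmul_opp_l x y : qmul (qopp x) y = qopp (qmul x y).
Proof. destruct x, y; qext; ring. Qed.
Lemma QP_n phi theta : qnorm2 (QP phi theta) = 1.
Proof. unfold qnorm2, QP; simpl. pose proof (sin2_cos2 phi). pose proof (sin2_cos2 theta). unfold Rsqr in *. nra. Qed.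

Lemma Q_of_param eps phi theta : 0 < eps < 1 -> 0 <= phi <= PI ->
  qmul (qinv (rh (param eps phi theta))) (rA (param eps phi theta)) = QP phi theta.
Proof. intros He Hp. rewrite param_eq. cbn [rA rh].
  rewrite <- qmul_assoc, qinv_l, qmul_one_l. reflexivity. rewrite hP_n by assumption. lra. Qed.

Lemma sin_sq_eq a b : a^2 = b^2 -> a = b \/ a = - b.
Proof. intro H. assert ((a-b)*(a+b) = 0) by nra. apply Rmult_integral in H0. destruct H0; [left|right]; lra. Qed.

Theorem param_in_Rset eps phi theta : 0 < eps < 1 -> in_coord_range phi theta -> in_Rset eps (param eps phi theta).
Proof.
  intros He [Hp Ht].
  pose proof (hP_n eps phi theta He Hp) as Hn.
  assert (Hnz : qnorm2 (hP eps phi theta) <> 0) by lra.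
  pose proof (Q_of_param eps phi theta He Hp) as HQ.
  rewrite param_eq in *. cbn [rA rB ra rb rh rw] in *.
  unfold in_Rset, in_SU2, qtrace; cbn [rA rB ra rb rh rw].
  split. { rewrite qnorm2_mul, Hn, QP_n; ring. }
  split. { unfold qnorm2; simpl. pose proof (sin2_cos2 (eps * sin phi)). pose proof (sin2_cos2 theta). unfold Rsqr in *. nra. }
  split. { apply kq_n. }
  split. { rewrite qnorm2_opp, !qnorm2_mul, qnorm2_qinv, qnorm2_qinv, Hn, kq_n by (rewrite ?kq_n; lra). field. }
  split. { exact Hn. }
  split. { rewrite qnorm2_opp. apply qone_n. }
  split. { unfold kq; simpl; ring. }
  split. { rewrite hP_eq; simpl; ring. }
  split. { reflexivity. }
  split. { rewrite hP_eq. pose proof (Cc_pos eps phi theta He Hp). unfold kq. qext; field; lra. }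
  split. { rewrite qinv_mone, qmul_mone_r, qmul_opp_l. reflexivity. }
  intros phi' r0 r1 r2 Hr HQ'. rewrite HQ' in HQ. unfold qexp, QP in HQ. injection HQ as E0 E1 E2 E3.
  unfold qexp.
  assert (Hs : sin phi' ^ 2 = sin phi ^ 2).
  { pose proof (sin2_cos2 theta). unfold Rsqr in *.
    transitivity ((sin phi' * r0)^2 + (sin phi' * r1)^2 + (sin phi' * r2)^2).
    - replace ((sin phi' * r0)^2 + (sin phi' * r1)^2 + (sin phi' * r2)^2) with (sin phi' ^2 * (r0^2+r1^2+r2^2)) by ring.
      rewrite Hr; ring.
    - rewrite E1, E2, E3. nra. }
  destruct (Req_dec (sin phi) 0) as [Z|Z].
  - assert (Z' : sin phi' = 0) by nra. rewrite Z, Z', !Rmult_0_r, sin_0. f_equal; ring.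
  - apply sin_sq_eq in Hs. destruct Hs as [Hs|Hs]; rewrite Hs in *.
    + assert (r0 = cos theta) by (apply (Rmult_eq_reg_l (sin phi)); auto; lra).
      assert (r1 = sin theta) by (apply (Rmult_eq_reg_l (sin phi)); auto; lra).
      assert (r2 = 0) by (apply (Rmult_eq_reg_l (sin phi)); auto; lra).
      subst. f_equal; ring.
    + assert (r0 = - cos theta) by (apply (Rmult_eq_reg_l (sin phi)); auto; lra).
      assert (r1 = - sin theta) by (apply (Rmult_eq_reg_l (sin phi)); auto; lra).
      assert (r2 = 0) by (apply (Rmult_eq_reg_l (sin phi)); auto; lra).
      subst. replace (eps * - sin phi) with (- (eps * sin phi)) by ring.
      rewrite cos_neg, sin_neg. f_equal; ring.
Qed.

Definition Qof (x : rep) : quat := qmul (qinv (rh x)) (rA x).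
Definition hpq (x : rep) : quat := qadd (rh x) (qsc (q0 (qmul (rh x) (ra x))) (ra x)).
Definition I0 (x : rep) : R := q0 (Qof x).
Definition I1 (x : rep) : R := q0 (qmul (Qof x) (hpq x)).
Definition I2 (x : rep) : R := q0 (qmul (Qof x) (qmul (ra x) (hpq x))).
Definition Nh (x : rep) : R := qnorm2 (hpq x).
Definition Psi (x : rep) : pt3 := (- I1 x / sqrt (Nh x), I2 x / sqrt (Nh x), I0 x).

Lemma rep_conj_eq x y : rep_conj x y -> exists g, in_SU2 g /\ y = conjmap g x.
Proof. intros [g [Hg [E1 [E2 [E3 [E4 [E5 E6]]]]]]]. exists g. split; auto.
  destruct y; unfold conjmap; simpl in *; subst; reflexivity. Qed.

Lemma Qof_conj g x : qnorm2 g <> 0 -> qnorm2 (rh x) <> 0 -> Qof (conjmap g x) = qconj g (Qof x).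
Proof. intros Hg Hh. unfold Qof, conjmap; cbn [rA rh]. rewrite qconj_mul, qconj_inv by assumption. reflexivity. Qed.

Lemma hpq_conj g x : qnorm2 g <> 0 -> hpq (conjmap g x) = qconj g (hpq x).
Proof. intros Hg. unfold hpq, conjmap; cbn [ra rh]. rewrite qconj_add, qconj_scm, <- qconj_mul, q0_conj by assumption. reflexivity. Qed.

Lemma Psi_conj g x : qnorm2 g <> 0 -> qnorm2 (rh x) <> 0 -> Psi (conjmap g x) = Psi x.
Proof. intros Hg Hh. unfold Psi, I0, I1, I2, Nh.
  rewrite Qof_conj, hpq_conj by assumption.
  replace (ra (conjmap g x)) with (qconj g (ra x)) by reflexivity.
  rewrite <- !qconj_mul, !q0_conj, qnorm2_conj by assumption. reflexivity. Qed.

Lemma Nh_conj g x : qnorm2 g <> 0 -> Nh (conjmap g x) = Nh x.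
Proof. intros Hg. unfold Nh. rewrite hpq_conj, qnorm2_conj by assumption. reflexivity. Qed.

Lemma Psi_inv x y : rep_conj x y -> qnorm2 (rh x) <> 0 -> Psi y = Psi x.
Proof. intros H Hh. destruct (rep_conj_eq x y H) as [g [Hg ->]]. apply Psi_conj; auto using su2_nz. Qed.

Lemma Nh_inv x y : rep_conj x y -> Nh y = Nh x.
Proof. intros H. destruct (rep_conj_eq x y H) as [g [Hg ->]]. apply Nh_conj; auto using su2_nz. Qed.

Lemma hP_form eps phi theta : hP eps phi theta = Qt 0 (q1 (hP eps phi theta)) 0 (q3 (hP eps phi theta)).
Proof. rewrite hP_eq. reflexivity. Qed.

Lemma hpq_param eps phi theta : hpq (param eps phi theta) = Qt 0 (q1 (hP eps phi theta)) 0 0.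
Proof. unfold hpq. rewrite param_eq; cbn [rh ra]. rewrite hP_form. set (a := q1 _). set (b := q3 _).
  unfold kq, qsc, qadd. simpl. qext; ring. Qed.

Lemma Nh_param eps phi theta : Nh (param eps phi theta) = q1 (hP eps phi theta) ^ 2.
Proof. unfold Nh. rewrite hpq_param. unfold qnorm2; simpl; ring. Qed.

Lemma Psi_param eps phi theta : 0 < eps < 1 -> in_coord_range phi theta -> Psi (param eps phi theta) = sph phi theta.
Proof. intros He [Hp Ht]. unfold Psi, I0, I1, I2. rewrite Nh_param.
  unfold Qof. rewrite Q_of_param by assumption. rewrite hpq_param.
  pose proof (hP_x_pos eps phi theta He Hp) as Hx.
  rewrite sqrt_pow2 by lra.
  replace (ra (param eps phi theta)) with kq by reflexivity.
  set (a := q1 (hP eps phi theta)) in *. unfold sph, QP, kq. simpl. f_equal. f_equal. all: field; lra. Qed.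

Lemma Rel_facts eps y : in_Rset eps y -> ra y = kq ->
  q3 (rB y) = 0 /\ q1 (rh y) * q2 (rB y) - q2 (rh y) * q1 (rB y) + q3 (rh y) * q0 (rB y) = 0.
Proof.
  intros [HA [HB [Ha [Hb [Hh [Hw [Hta [Hth [Hw1 [Hrel [Hbe Hpert]]]]]]]]]]] Hk.
  rewrite Hw1, Hk in Hrel. unfold in_SU2, qnorm2, qtrace in *.
  destruct (rh y) as [h0 h1 h2 h3], (rB y) as [b0 b1 b2 b3]; simpl in *.
  assert (h0 = 0) by lra. subst h0.
  injection Hrel as E0 E1 E2 E3.
  split; nra.
Qed.

Lemma hsolve m hz cn t : 0 < m -> 0 < cn -> m^2 + hz^2 = 1 -> m * t + hz * cn = 0 ->
  m = cn / sqrt (cn^2 + t^2) /\ hz = - t / sqrt (cn^2 + t^2).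
Proof.
  intros Hm Hc Hn Hr.
  assert (Hz : hz = - m * t / cn) by (apply (Rmult_eq_reg_r cn); [|lra]; field_simplify; lra).
  subst hz.
  assert (H2 : m^2 * (cn^2+t^2) = cn^2).
  { replace (m^2*(cn^2+t^2)) with ((m^2 + (-m*t/cn)^2) * cn^2) by (field; lra). rewrite Hn; ring. }
  assert (Hs : sqrt (cn^2 + t^2) = cn / m).
  { apply sqrt_lem_1. nra. apply Rlt_le, Rdiv_lt_0_compat; lra.
    replace (cn/m*(cn/m)) with (cn^2/m^2) by (field; lra). apply (Rmult_eq_reg_r (m^2)); [|nra]. field_simplify; [|lra]. nra. }
  rewrite Hs. split; field; lra.
Qed.

Lemma Fin2 eps y phi theta : 0 < eps < 1 -> in_Rset eps y -> ra y = kq -> q2 (rh y) = 0 -> 0 < q1 (rh y) ->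
  in_coord_range phi theta -> Qof y = QP phi theta ->
  rB y = Qt (cos (eps * sin phi)) (sin (eps * sin phi) * cos theta) (sin (eps * sin phi) * sin theta) 0 ->
  y = param eps phi theta.
Proof.
  intros He HR Hk Hh2 Hh1 [Hp Ht] HQ HB.
  destruct (Rel_facts eps y HR Hk) as [_ Hr2].
  pose proof HR as [HA [HB' [Ha [Hb [Hh [Hw [Hta [Hth [Hw1 [Hrel [Hbe Hpert]]]]]]]]]]].
  assert (Hhp : rh y = hP eps phi theta).
  { rewrite hP_eq. unfold Cc. unfold in_SU2, qnorm2, qtrace in Hh, Hth.
    rewrite HB in Hr2. simpl in Hr2.
    destruct (rh y) as [h0 m h2 hz]; simpl in *. subst h2.
    assert (h0 = 0) by lra. subst h0.
    destruct (hsolve m hz (cos (eps * sin phi)) (sin (eps * sin phi) * sin theta)) as [E1 E2]; auto.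
    apply cn_pos; auto. lra. nra.
    replace ((sin (eps * sin phi) * sin theta)^2) with (sin (eps * sin phi) ^ 2 * sin theta ^ 2) in E1, E2 by ring.
    rewrite E1, E2 at 1. reflexivity. }
  assert (HAe : rA y = qmul (hP eps phi theta) (QP phi theta)).
  { rewrite <- HQ, <- Hhp. unfold Qof. rewrite <- qmul_assoc, qinv_r, qmul_one_l. reflexivity. apply su2_nz; auto. }
  assert (Hbe' : rb y = qopp (qmul (qmul (hP eps phi theta) (qinv kq)) (qinv (hP eps phi theta)))).
  { rewrite Hbe, Hw1, Hk, Hhp, qinv_mone, qmul_mone_r, qmul_opp_l. reflexivity. }
  rewrite param_eq. destruct y as [A0 B0 a0 b0 h0 w0]; simpl in *. rewrite HAe, HB, Hk, Hbe', Hhp, Hw1. reflexivity.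
Qed.

Lemma Fin1 eps y : 0 < eps < 1 -> in_Rset eps y -> ra y = kq -> q2 (rh y) = 0 -> 0 < q1 (rh y) ->
  exists phi theta, in_coord_range phi theta /\ y = param eps phi theta.
Proof.
  intros He HR Hk Hh2 Hh1.
  pose proof HR as [HA [HB' [Ha [Hb [Hh [Hw [Hta [Hth [Hw1 [Hrel [Hbe Hpert]]]]]]]]]]].
  destruct (Rel_facts eps y HR Hk) as [Hr1 _].
  assert (HQn : qnorm2 (Qof y) = 1).
  { unfold Qof. rewrite qnorm2_mul, qnorm2_qinv by (apply su2_nz; auto). unfold in_SU2 in *. rewrite Hh, HA. field. }
  unfold Qof in *. destruct (qmul (qinv (rh y)) (rA y)) as [Q0 Q1 Q2 Q3] eqn:EQ.
  unfold qnorm2 in HQn; simpl in HQn.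
  assert (HQ0 : -1 <= Q0 <= 1) by nra.
  set (phi0 := acos Q0).
  assert (Hp0 : 0 <= phi0 <= PI) by apply acos_bound.
  assert (Hc0 : cos phi0 = Q0) by (apply cos_acos; auto).
  assert (HS : sin phi0 ^ 2 = Q1^2 + Q2^2 + Q3^2).
  { pose proof (sin2_cos2 phi0). unfold Rsqr in *. rewrite Hc0 in H. nra. }
  assert (HS0 : 0 <= sin phi0) by (apply sin_nonneg_range; auto).
  set (S := sin phi0) in *.
  destruct (Req_dec S 0) as [Z|Z].
  - assert (Q1 = 0 /\ Q2 = 0 /\ Q3 = 0) as [-> [-> ->]] by (rewrite Z in HS; nra).
    assert (HBe : rB y = qexp (eps * S) 1 0 0).
    { apply Hpert. ring. unfold qexp. fold S. rewrite Z, Hc0. f_equal; ring. }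
    exists phi0, 0. split. { split; auto. pose proof PI_RGT_0; lra. }
    apply Fin2; auto. { split; auto. pose proof PI_RGT_0; lra. }
    + unfold Qof, QP. rewrite EQ. fold S. rewrite Z, Hc0. f_equal; ring.
    + rewrite HBe. unfold qexp. fold S. rewrite cos_0, sin_0. f_equal; ring.
  - assert (Sp : 0 < S) by lra.
    assert (Hrn : (Q1/S)^2 + (Q2/S)^2 + (Q3/S)^2 = 1).
    { field_simplify; [|lra]. rewrite <- HS. field. lra. }
    assert (HBe : rB y = qexp (eps * S) (Q1/S) (Q2/S) (Q3/S)).
    { apply Hpert. exact Hrn. unfold qexp. fold S. rewrite Hc0. f_equal; field; lra. }
    assert (Hsn : 0 < sin (eps * S)).
    { apply sin_pos_small. pose proof (SIN_bound phi0). fold S in H. nra. }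
    assert (HQ3 : Q3 = 0).
    { rewrite HBe in Hr1. unfold qexp in Hr1; simpl in Hr1.
      apply Rmult_integral in Hr1. destruct Hr1 as [X|X]; [lra|].
      apply (Rmult_eq_reg_r (/S)). unfold Rdiv in X; rewrite X. ring. apply Rinv_neq_0_compat; lra. }
    subst Q3.
    destruct (angle (Q1/S) (Q2/S)) as [th [Hth0 [Hct [Hst _]]]].
    { replace ((Q1/S)^2 + (Q2/S)^2) with ((Q1/S)^2 + (Q2/S)^2 + (0/S)^2) by (unfold Rdiv; ring). exact Hrn. }
    exists phi0, th. split. { split; auto. }
    apply Fin2; auto. { split; auto. }
    + unfold Qof, QP. rewrite EQ. fold S. rewrite Hc0, Hct, Hst. f_equal; field; lra.
    + rewrite HBe. unfold qexp. rewrite Hct, Hst. f_equal; field; lra.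
Qed.

Lemma rot1 a1 a2 a3 : a1^2+a2^2+a3^2 = 1 -> exists g, qnorm2 g <> 0 /\ qconj g (Qt 0 a1 a2 a3) = kq.
Proof.
  intro H. destruct (Req_dec a3 (-1)) as [E|E].
  - assert (a1 = 0 /\ a2 = 0) as [-> ->] by (subst; nra). subst a3.
    exists (Qt 0 1 0 0). split. unfold qnorm2; simpl; lra.
    unfold qconj, qinv, qnorm2, kq; simpl; qext; field.
  - exists (Qt (1+a3) (-a2) a1 0).
    assert (Hn : qnorm2 (Qt (1+a3) (-a2) a1 0) <> 0) by (unfold qnorm2; simpl; nra).
    split; auto. unfold qconj.
    assert (Hm : qmul (Qt (1+a3) (-a2) a1 0) (Qt 0 a1 a2 a3) = qmul kq (Qt (1+a3) (-a2) a1 0)) by (unfold kq; qext; nra).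
    rewrite Hm, qmul_assoc, qinv_r, qmul_one_r by exact Hn. reflexivity.
Qed.

Lemma rot2 hx hy hz : 0 < hx^2+hy^2 -> exists g, qnorm2 g <> 0 /\ qconj g kq = kq /\
  qconj g (Qt 0 hx hy hz) = Qt 0 (sqrt (hx^2+hy^2)) 0 hz.
Proof.
  intro H. set (m := sqrt (hx^2+hy^2)).
  assert (Hm : 0 < m) by (apply sqrt_lt_R0; lra).
  assert (Hm2 : m^2 = hx^2+hy^2) by (unfold m; rewrite <- Rsqr_pow2; apply Rsqr_sqrt; lra).
  destruct (Req_dec (m + hx) 0) as [E|E].
  - assert (hy = 0) by nra. subst hy. assert (hx = -m) by lra. rewrite H0.
    exists kq. split. rewrite kq_n; lra.
    split; unfold qconj, qinv, qnorm2, kq; simpl; qext; field.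
  - exists (Qt (m+hx) 0 0 hy).
    assert (Hn : qnorm2 (Qt (m+hx) 0 0 hy) <> 0) by (unfold qnorm2; simpl; nra).
    split; auto. split.
    + unfold qconj. assert (Hc : qmul (Qt (m+hx) 0 0 hy) kq = qmul kq (Qt (m+hx) 0 0 hy)) by (unfold kq; qext; ring).
      rewrite Hc, qmul_assoc, qinv_r, qmul_one_r by exact Hn. reflexivity.
    + unfold qconj. assert (Hc : qmul (Qt (m+hx) 0 0 hy) (Qt 0 hx hy hz) = qmul (Qt 0 m 0 hz) (Qt (m+hx) 0 0 hy)) by (qext; nra).
      rewrite Hc, qmul_assoc, qinv_r, qmul_one_r by exact Hn. reflexivity.
Qed.

Lemma B0_pos eps y : 0 < eps < 1 -> in_Rset eps y -> 0 < q0 (rB y).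
Proof.
  intros He HR.
  pose proof HR as [HA [HB' [Ha [Hb [Hh [Hw [Hta [Hth [Hw1 [Hrel [Hbe Hpert]]]]]]]]]]].
  assert (HQn : qnorm2 (qmul (qinv (rh y)) (rA y)) = 1).
  { rewrite qnorm2_mul, qnorm2_qinv by (apply su2_nz; auto). unfold in_SU2 in *. rewrite Hh, HA. field. }
  destruct (qmul (qinv (rh y)) (rA y)) as [Q0 Q1 Q2 Q3] eqn:EQ.
  unfold qnorm2 in HQn; simpl in HQn.
  assert (HQ0 : -1 <= Q0 <= 1) by nra.
  set (phi0 := acos Q0).
  assert (Hp0 : 0 <= phi0 <= PI) by apply acos_bound.
  assert (Hc0 : cos phi0 = Q0) by (apply cos_acos; auto).
  assert (HS : sin phi0 ^ 2 = Q1^2 + Q2^2 + Q3^2).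
  { pose proof (sin2_cos2 phi0). unfold Rsqr in *. rewrite Hc0 in H. nra. }
  assert (HS0 : 0 <= sin phi0) by (apply sin_nonneg_range; auto).
  assert (Hsmall : 0 <= eps * sin phi0 < 1) by (pose proof (SIN_bound phi0); nra).
  set (S := sin phi0) in *.
  destruct (Req_dec S 0) as [Z|Z].
  - assert (Q1 = 0 /\ Q2 = 0 /\ Q3 = 0) as [-> [-> ->]] by (rewrite Z in HS; nra).
    assert (HBe : rB y = qexp (eps * S) 1 0 0).
    { apply Hpert. ring. unfold qexp. fold S. rewrite Z, Hc0. f_equal; ring. }
    rewrite HBe. simpl. apply cos_pos_small. auto.
  - assert (Sp : 0 < S) by lra.
    assert (Hrn : (Q1/S)^2 + (Q2/S)^2 + (Q3/S)^2 = 1).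
    { field_simplify; [|lra]. rewrite <- HS. field. lra. }
    assert (HBe : rB y = qexp (eps * S) (Q1/S) (Q2/S) (Q3/S)).
    { apply Hpert. exact Hrn. unfold qexp. fold S. rewrite Hc0. f_equal; field; lra. }
    rewrite HBe. simpl. apply cos_pos_small. auto.
Qed.

Theorem surj eps x : 0 < eps < 1 -> in_Rset eps x ->
  exists phi theta, in_coord_range phi theta /\ rep_conj x (param eps phi theta).
Proof.
  intros He HR.
  pose proof HR as [HA [HB' [Ha [Hb [Hh [Hw [Hta [Hth [Hw1 [Hrel [Hbe Hpert]]]]]]]]]]].
  unfold in_SU2, qtrace, qnorm2 in Ha, Hta.
  destruct (rot1 (q1 (ra x)) (q2 (ra x)) (q3 (ra x))) as [g1 [Hg1 Eg1]]. nra.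
  assert (Ea : ra x = Qt 0 (q1 (ra x)) (q2 (ra x)) (q3 (ra x))).
  { destruct (ra x); simpl in *. f_equal. lra. }
  set (y1 := conjmap g1 x).
  assert (HR1 : in_Rset eps y1) by (apply Rset_conj; auto).
  assert (Hk1 : ra y1 = kq) by (unfold y1, conjmap; cbn [ra]; rewrite Ea; exact Eg1).
  pose proof HR1 as [_ [_ [_ [_ [Hh1 [_ [_ [Hth1 _]]]]]]]].
  destruct (Rel_facts eps y1 HR1 Hk1) as [_ Hr2].
  pose proof (B0_pos eps y1 He HR1) as HB0.
  unfold in_SU2, qtrace, qnorm2 in Hh1, Hth1.
  assert (Eh : rh y1 = Qt 0 (q1 (rh y1)) (q2 (rh y1)) (q3 (rh y1))).
  { destruct (rh y1); simpl in *. f_equal. lra. }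
  assert (Hxy : 0 < q1 (rh y1) ^ 2 + q2 (rh y1) ^ 2).
  { destruct (Rlt_or_le 0 (q1 (rh y1) ^ 2 + q2 (rh y1) ^ 2)) as [P|P]; auto.
    assert (Z1 : q1 (rh y1) = 0) by nra. assert (Z2 : q2 (rh y1) = 0) by nra.
    assert (Z3 : q3 (rh y1) = 0) by (rewrite Z1, Z2 in Hr2; nra).
    assert (q0 (rh y1) = 0) by lra. nra. }
  destruct (rot2 (q1 (rh y1)) (q2 (rh y1)) (q3 (rh y1)) Hxy) as [g2 [Hg2 [Eg2k Eg2h]]].
  set (y2 := conjmap g2 y1).
  assert (HR2 : in_Rset eps y2) by (apply Rset_conj; auto).
  assert (Hk2 : ra y2 = kq) by (unfold y2, conjmap; cbn [ra]; rewrite Hk1; exact Eg2k).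
  assert (Eh2 : rh y2 = Qt 0 (sqrt (q1 (rh y1) ^ 2 + q2 (rh y1) ^ 2)) 0 (q3 (rh y1))).
  { unfold y2, conjmap; cbn [rh]. rewrite Eh at 1. exact Eg2h. }
  destruct (Fin1 eps y2 He HR2 Hk2) as [phi [theta [Hc Ey]]].
  { rewrite Eh2; reflexivity. }
  { rewrite Eh2; cbn [q1]. apply sqrt_lt_R0; lra. }
  exists phi, theta. split; auto. rewrite <- Ey.
  apply rep_conj_trans with y1. apply rep_conj_of; auto. apply rep_conj_of; auto.
Qed.

Lemma cont_eps g t0 : continuity_pt g t0 -> forall e, 0 < e -> exists dl, 0 < dl /\
  forall t, Rabs (t - t0) < dl -> Rabs (g t - g t0) < e.
Proof.
  intros H e He. unfold continuity_pt, continue_in, limit1_in, limit_in, D_x, no_cond in H.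
  destruct (H e He) as [dl [Hdl Hf]]. exists dl. split; [lra|]. intros t Ht.
  destruct (Req_dec t t0) as [->|Hne].
  - rewrite Rminus_diag, Rabs_R0; lra.
  - apply (Hf t). split; [split; auto|]. simpl. unfold Rdist. exact Ht.
Qed.

Section Frame.
Variable T : Type.
Variable d : T -> T -> R.
Variable S : T -> Prop.
Variable x : T.

Definition Near (P : T -> Prop) : Prop := exists dl, 0 < dl /\ forall y, S y -> d x y < dl -> P y.

Lemma near_and P Q : Near P -> Near Q -> Near (fun y => P y /\ Q y).
Proof. intros [d1 [H1 P1]] [d2 [H2 P2]]. exists (Rmin d1 d2). split. apply Rmin_glb_lt; auto.
  intros y Sy Hy. split; [apply P1|apply P2]; auto; eapply Rlt_le_trans; eauto; [apply Rmin_l|apply Rmin_r]. Qed.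

Lemma near_mono (P Q : T -> Prop) : (forall y, P y -> Q y) -> Near P -> Near Q.
Proof. intros HPQ [dl [H1 P1]]. exists dl. split; auto. Qed.

Definition cts (f : T -> R) : Prop := forall e, 0 < e -> Near (fun y => Rabs (f y - f x) < e).

Lemma cts_const c : cts (fun _ => c).
Proof. intros e He. exists 1. split; [lra|]. intros. rewrite Rminus_diag, Rabs_R0; lra. Qed.

Lemma cts_comp g f : cts f -> continuity_pt g (f x) -> cts (fun y => g (f y)).
Proof. intros Hf Hg e He. destruct (cont_eps g (f x) Hg e He) as [dl [Hdl Hc]].
  apply (near_mono (fun y => Rabs (f y - f x) < dl)); auto. Qed.

Lemma cts_plus f g : cts f -> cts g -> cts (fun y => f y + g y).
Proof. intros Hf Hg e He.
  apply (near_mono (fun y => Rabs (f y - f x) < e/2 /\ Rabs (g y - g x) < e/2)).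
  - intros y [A B]. replace (f y + g y - (f x + g x)) with ((f y - f x) + (g y - g x)) by ring.
    eapply Rle_lt_trans. apply Rabs_triang. lra.
  - apply near_and; [apply Hf|apply Hg]; lra. Qed.

Lemma cts_opp f : cts f -> cts (fun y => - f y).
Proof. intros Hf e He. apply (near_mono (fun y => Rabs (f y - f x) < e)); auto.
  intros y A. replace (- f y - - f x) with (- (f y - f x)) by ring. rewrite Rabs_Ropp. exact A. Qed.

Lemma cts_minus f g : cts f -> cts g -> cts (fun y => f y - g y).
Proof. intros Hf Hg. apply (cts_plus f (fun y => - g y)); auto. apply cts_opp; auto. Qed.

Lemma cts_mult f g : cts f -> cts g -> cts (fun y => f y * g y).
Proof. intros Hf Hg e He.
  set (M := Rabs (f x) + Rabs (g x) + 1).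
  assert (HM : 0 < M) by (unfold M; pose proof (Rabs_pos (f x)); pose proof (Rabs_pos (g x)); lra).
  set (e1 := Rmin 1 (e / (2 * M))).
  assert (He1 : 0 < e1) by (apply Rmin_glb_lt; [lra|]; apply Rdiv_lt_0_compat; lra).
  apply (near_mono (fun y => Rabs (f y - f x) < e1 /\ Rabs (g y - g x) < e1)).
  - intros y [A B].
    replace (f y * g y - f x * g x) with ((f y - f x) * (g y - g x) + f x * (g y - g x) + g x * (f y - f x)) by ring.
    assert (E1 : e1 <= 1) by apply Rmin_l. assert (E2 : e1 <= e / (2*M)) by apply Rmin_r.
    assert (E3 : e1 * M <= e/2). { apply (Rmult_le_compat_r M) in E2; [|lra]. replace (e/(2*M)*M) with (e/2) in E2 by (field; lra). exact E2. }
    pose proof (Rabs_pos (f y - f x)). pose proof (Rabs_pos (g y - g x)).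
    pose proof (Rabs_pos (f x)). pose proof (Rabs_pos (g x)).
    eapply Rle_lt_trans. apply Rabs_triang. eapply Rle_lt_trans. apply Rplus_le_compat_r. apply Rabs_triang.
    rewrite !Rabs_mult.
    assert (Rabs (f y - f x) * Rabs (g y - g x) <= e1 * e1) by (apply Rmult_le_compat; lra).
    assert (Rabs (f x) * Rabs (g y - g x) <= Rabs (f x) * e1) by (apply Rmult_le_compat_l; lra).
    assert (Rabs (g x) * Rabs (f y - f x) <= Rabs (g x) * e1) by (apply Rmult_le_compat_l; lra).
    assert (e1 * e1 <= e1 * 1) by (apply Rmult_le_compat_l; lra).
    unfold M in E3.
    assert (Rabs (f x) * Rabs (g y - g x) < Rabs (f x) * e1 + e1 * 1 \/ Rabs (g y - g x) < e1) by (right; lra).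
    nra.
  - apply near_and; [apply Hf|apply Hg]; auto. Qed.

Lemma cts_inv f : cts f -> f x <> 0 -> cts (fun y => / f y).
Proof. intros Hf Hn. apply (cts_comp Rinv f Hf).
  apply (continuity_pt_inv id). apply derivable_continuous_pt, derivable_pt_id. exact Hn. Qed.

Lemma cts_div f g : cts f -> cts g -> g x <> 0 -> cts (fun y => f y / g y).
Proof. intros Hf Hg Hn. unfold Rdiv. apply cts_mult; auto. apply cts_inv; auto. Qed.

Lemma cts_sqrt f : cts f -> 0 <= f x -> cts (fun y => sqrt (f y)).
Proof. intros Hf Hn. apply (cts_comp sqrt f Hf). apply continuity_pt_sqrt; auto. Qed.

Lemma cts_sin f : cts f -> cts (fun y => sin (f y)).
Proof. intros Hf. apply (cts_comp sin f Hf). apply continuity_sin. Qed.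

Lemma cts_cos f : cts f -> cts (fun y => cos (f y)).
Proof. intros Hf. apply (cts_comp cos f Hf). apply continuity_cos. Qed.

Lemma cts_pow2 f : cts f -> cts (fun y => f y ^ 2).
Proof. intros Hf. apply (cts_comp (fun t => t^2) f Hf). apply derivable_continuous_pt. apply derivable_pt_pow. Qed.

Definition qcts (F : T -> quat) : Prop :=
  cts (fun y => q0 (F y)) /\ cts (fun y => q1 (F y)) /\ cts (fun y => q2 (F y)) /\ cts (fun y => q3 (F y)).

Lemma qcts_Qt f0 f1 f2 f3 : cts f0 -> cts f1 -> cts f2 -> cts f3 -> qcts (fun y => Qt (f0 y) (f1 y) (f2 y) (f3 y)).
Proof. intros; repeat split; auto. Qed.

Lemma qcts_const c : qcts (fun _ => c).
Proof. repeat split; apply cts_const. Qed.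

Lemma qcts_mul F G : qcts F -> qcts G -> qcts (fun y => qmul (F y) (G y)).
Proof. intros [A0 [A1 [A2 A3]]] [B0 [B1 [B2 B3]]]. unfold qmul.
  repeat split; cbn [q0 q1 q2 q3];
  repeat (apply cts_plus || apply cts_minus || apply cts_mult || apply cts_opp); auto. Qed.

Lemma qcts_opp F : qcts F -> qcts (fun y => qopp (F y)).
Proof. intros [A0 [A1 [A2 A3]]]. unfold qopp. repeat split; cbn [q0 q1 q2 q3]; apply cts_opp; auto. Qed.

Lemma qcts_norm2 F : qcts F -> cts (fun y => qnorm2 (F y)).
Proof. intros [A0 [A1 [A2 A3]]]. unfold qnorm2. repeat apply cts_plus; apply cts_pow2; auto. Qed.

Lemma qcts_inv F : qcts F -> qnorm2 (F x) <> 0 -> qcts (fun y => qinv (F y)).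
Proof. intros HF Hn. pose proof (qcts_norm2 F HF) as HN. destruct HF as [A0 [A1 [A2 A3]]]. unfold qinv.
  repeat split; cbn [q0 q1 q2 q3]; apply cts_div; auto; apply cts_opp; auto. Qed.

Lemma qcts_sc f F : cts f -> qcts F -> qcts (fun y => Qt (f y * q0 (F y)) (f y * q1 (F y)) (f y * q2 (F y)) (f y * q3 (F y))).
Proof. intros Hf [A0 [A1 [A2 A3]]]. repeat split; apply cts_mult; auto. Qed.

Lemma qcts_add F G : qcts F -> qcts G -> qcts (fun y => Qt (q0 (F y) + q0 (G y)) (q1 (F y) + q1 (G y)) (q2 (F y) + q2 (G y)) (q3 (F y) + q3 (G y))).
Proof. intros [A0 [A1 [A2 A3]]] [B0 [B1 [B2 B3]]]. repeat split; apply cts_plus; auto. Qed.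

End Frame.

Definition sinc (t : R) : R := match Req_EM_T t 0 with left _ => 1 | right _ => sin t / t end.

Lemma sinc_nz t : t <> 0 -> sinc t = sin t / t.
Proof. intro H. unfold sinc. destruct (Req_EM_T t 0); [contradiction|reflexivity]. Qed.
Lemma sinc_0 : sinc 0 = 1.
Proof. unfold sinc. destruct (Req_EM_T 0 0); [reflexivity|contradiction]. Qed.

Lemma sinc_cont t0 : continuity_pt sinc t0.
Proof.
  unfold continuity_pt, continue_in, limit1_in, limit_in, D_x, no_cond. simpl. unfold Rdist.
  intros e He.
  destruct (Req_dec t0 0) as [->|Hn].
  - destruct (derivable_pt_lim_sin_0 e He) as [dl Hdl].
    exists dl. split. apply cond_pos. intros t [[_ Ht] Hd].
    rewrite sinc_0, sinc_nz by auto. rewrite Rminus_0_r in Hd.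
    specialize (Hdl t (not_eq_sym Ht) Hd). rewrite Rplus_0_l, sin_0, Rminus_0_r in Hdl. exact Hdl.
  - assert (Hc : continuity_pt (sin / id)%F t0).
    { apply continuity_pt_div. apply continuity_sin. apply derivable_continuous_pt, derivable_pt_id. exact Hn. }
    destruct (cont_eps _ _ Hc e He) as [dl [Hdl Hf]].
    exists (Rmin dl (Rabs t0)). split. apply Rmin_glb_lt; auto. apply Rabs_pos_lt; auto.
    intros t [_ Hd].
    assert (Hd1 : Rabs (t - t0) < dl) by (eapply Rlt_le_trans; [exact Hd| apply Rmin_l]).
    assert (Hd2 : Rabs (t - t0) < Rabs t0) by (eapply Rlt_le_trans; [exact Hd| apply Rmin_r]).
    assert (Htn : t <> 0). { intro Z. subst. rewrite Rminus_0_l, Rabs_Ropp in Hd2. lra. }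
    rewrite !sinc_nz by auto. specialize (Hf t Hd1). unfold div_fct, id in Hf. exact Hf.
Qed.

Lemma sinc_prop e s : 0 < e -> e * sinc (e * s) * s = sin (e * s).
Proof. intro He. destruct (Req_dec s 0) as [->|Hs].
  - rewrite !Rmult_0_r, sin_0. ring.
  - rewrite sinc_nz. field. split; auto. lra. apply Rmult_integral_contrapositive; split; lra. Qed.

Lemma abs_le_sqrt a b : a^2 <= b -> Rabs a <= sqrt b.
Proof. intro H. rewrite <- sqrt_Rsqr_abs. apply sqrt_le_1_alt. unfold Rsqr; lra. Qed.

Lemma cts_lip T d S x (f : T -> R) : (forall y, Rabs (f y - f x) <= d x y) -> cts T d S x f.
Proof. intros H e He. exists e. split; auto. intros y _ Hy. eapply Rle_lt_trans; eauto. Qed.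

Lemma qclose T d S x (G : T -> quat) : qcts T d S x G -> forall e, 0 < e -> Near T d S x (fun y => qdist2 (G x) (G y) < e).
Proof. intros [A0 [A1 [A2 A3]]] e He.
  set (dl := Rmin 1 (e/4)).
  assert (H1 : 0 < dl) by (apply Rmin_glb_lt; lra). assert (H2 : dl <= 1) by apply Rmin_l. assert (H3 : dl <= e/4) by apply Rmin_r.
  apply (near_mono T d S x (fun y => (Rabs (q0 (G y) - q0 (G x)) < dl /\ Rabs (q1 (G y) - q1 (G x)) < dl) /\
     (Rabs (q2 (G y) - q2 (G x)) < dl /\ Rabs (q3 (G y) - q3 (G x)) < dl))).
  - intros y [[B0 B1] [B2 B3]]. unfold qdist2.
    assert (K : forall a b, Rabs (a - b) < dl -> (b - a)^2 < e/4).
    { intros a b Hab. rewrite <- Rabs_Ropp in Hab. replace (- (a - b)) with (b - a) in Hab by ring.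
      rewrite <- pow2_abs. pose proof (Rabs_pos (b-a)). nra. }
    pose proof (K _ _ B0). pose proof (K _ _ B1). pose proof (K _ _ B2). pose proof (K _ _ B3). lra.
  - repeat apply near_and; auto. Qed.

Lemma qdist2_ge0 a b : 0 <= qdist2 a b.
Proof. unfold qdist2. repeat apply Rplus_le_le_0_compat; apply pow2_ge_0. Qed.

Lemma rep_close T d S x (F : T -> rep) :
  qcts T d S x (fun y => rA (F y)) -> qcts T d S x (fun y => rB (F y)) -> qcts T d S x (fun y => ra (F y)) ->
  qcts T d S x (fun y => rb (F y)) -> qcts T d S x (fun y => rh (F y)) -> qcts T d S x (fun y => rw (F y)) ->
  forall e, 0 < e -> Near T d S x (fun y => rep_dist (F x) (F y) < e).
Proof. intros HA HB Ha Hb Hh Hw e He.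
  assert (He2 : 0 < e^2/6) by (apply Rdiv_lt_0_compat; nra).
  apply (near_mono T d S x (fun y => ((qdist2 (rA (F x)) (rA (F y)) < e^2/6 /\ qdist2 (rB (F x)) (rB (F y)) < e^2/6) /\
     (qdist2 (ra (F x)) (ra (F y)) < e^2/6 /\ qdist2 (rb (F x)) (rb (F y)) < e^2/6)) /\
     (qdist2 (rh (F x)) (rh (F y)) < e^2/6 /\ qdist2 (rw (F x)) (rw (F y)) < e^2/6))).
  - intros y [[[A1 A2] [A3 A4]] [A5 A6]]. unfold rep_dist.
    rewrite <- (sqrt_pow2 e) by lra. apply sqrt_lt_1_alt. split.
    + pose proof (qdist2_ge0 (rA (F x)) (rA (F y))); pose proof (qdist2_ge0 (rB (F x)) (rB (F y)));
      pose proof (qdist2_ge0 (ra (F x)) (ra (F y))); pose proof (qdist2_ge0 (rb (F x)) (rb (F y)));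
      pose proof (qdist2_ge0 (rh (F x)) (rh (F y))); pose proof (qdist2_ge0 (rw (F x)) (rw (F y))); lra.
    + lra.
  - repeat apply near_and;
    first [apply (qclose _ _ _ _ (fun y => rA (F y))) | apply (qclose _ _ _ _ (fun y => rB (F y)))
          | apply (qclose _ _ _ _ (fun y => ra (F y))) | apply (qclose _ _ _ _ (fun y => rb (F y)))
          | apply (qclose _ _ _ _ (fun y => rh (F y))) | apply (qclose _ _ _ _ (fun y => rw (F y)))]; auto. Qed.

Lemma pt3_close T d S x (f1 f2 f3 : T -> R) :
  cts T d S x f1 -> cts T d S x f2 -> cts T d S x f3 ->
  forall e, 0 < e -> Near T d S x (fun y => dist3 (f1 x, f2 x, f3 x) (f1 y, f2 y, f3 y) < e).
Proof. intros H1 H2 H3 e He.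
  assert (He2 : 0 < e/2) by lra.
  apply (near_mono T d S x (fun y => (Rabs (f1 y - f1 x) < e/2 /\ Rabs (f2 y - f2 x) < e/2) /\ Rabs (f3 y - f3 x) < e/2)).
  - intros y [[A1 A2] A3]. unfold dist3; cbv beta iota.
    rewrite <- (sqrt_pow2 e) by lra. apply sqrt_lt_1_alt. split. pose proof (pow2_ge_0 (f1 x - f1 y)); pose proof (pow2_ge_0 (f2 x - f2 y)); pose proof (pow2_ge_0 (f3 x - f3 y)); lra.
    assert (K : forall a b, Rabs (a - b) < e/2 -> (b - a)^2 < e^2/4).
    { intros a b Hab. rewrite <- Rabs_Ropp in Hab. replace (- (a - b)) with (b - a) in Hab by ring.
      rewrite <- pow2_abs. pose proof (Rabs_pos (b-a)). nra. }
    pose proof (K _ _ A1). pose proof (K _ _ A2). pose proof (K _ _ A3). assert (0 < e^2) by (apply pow_lt; lra). lra.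
  - repeat apply near_and; auto. Qed.

Definition px (p : pt3) : R := fst (fst p).
Definition py (p : pt3) : R := snd (fst p).
Definition pz (p : pt3) : R := snd p.

Lemma px_cts S p : cts pt3 dist3 S p px.
Proof. apply cts_lip. intros [[a b] c]. destruct p as [[a' b'] c']. unfold px, dist3; simpl.
  apply abs_le_sqrt. pose proof (pow2_ge_0 (a-a')); pose proof (pow2_ge_0 (b-b')); pose proof (pow2_ge_0 (c-c')); nra. Qed.
Lemma py_cts S p : cts pt3 dist3 S p py.
Proof. apply cts_lip. intros [[a b] c]. destruct p as [[a' b'] c']. unfold py, dist3; simpl.
  apply abs_le_sqrt. pose proof (pow2_ge_0 (a-a')); pose proof (pow2_ge_0 (b-b')); pose proof (pow2_ge_0 (c-c')); nra. Qed.
Lemma pz_cts S p : cts pt3 dist3 S p pz.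
Proof. apply cts_lip. intros [[a b] c]. destruct p as [[a' b'] c']. unfold pz, dist3; simpl.
  apply abs_le_sqrt. pose proof (pow2_ge_0 (a-a')); pose proof (pow2_ge_0 (b-b')); pose proof (pow2_ge_0 (c-c')); nra. Qed.

Lemma qcomp_le S (G : rep -> quat) x :
  (forall y, qdist2 (G x) (G y) <= qdist2 (rA x) (rA y) + qdist2 (rB x) (rB y) + qdist2 (ra x) (ra y) +
        qdist2 (rb x) (rb y) + qdist2 (rh x) (rh y) + qdist2 (rw x) (rw y)) ->
  qcts rep rep_dist S x G.
Proof. intro H. unfold qcts. repeat split; apply cts_lip; intro y; specialize (H y); unfold rep_dist;
  apply abs_le_sqrt; unfold qdist2 in *;
  repeat match goal with |- context [ (?a - ?b)^2 ] => idtac end;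
  pose proof (pow2_ge_0 (q0 (G x) - q0 (G y))); pose proof (pow2_ge_0 (q1 (G x) - q1 (G y)));
  pose proof (pow2_ge_0 (q2 (G x) - q2 (G y))); pose proof (pow2_ge_0 (q3 (G x) - q3 (G y)));
  nra. Qed.

Ltac qd_nonneg := unfold qdist2; repeat apply Rplus_le_le_0_compat; apply pow2_ge_0.

Lemma rA_cts S x : qcts rep rep_dist S x rA.
Proof. apply qcomp_le. intro y. pose proof (qdist2_ge0 (rB x) (rB y)); pose proof (qdist2_ge0 (ra x) (ra y));
  pose proof (qdist2_ge0 (rb x) (rb y)); pose proof (qdist2_ge0 (rh x) (rh y)); pose proof (qdist2_ge0 (rw x) (rw y));
  pose proof (qdist2_ge0 (rA x) (rA y)); lra. Qed.
Lemma rB_cts S x : qcts rep rep_dist S x rB.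
Proof. apply qcomp_le. intro y. pose proof (qdist2_ge0 (rB x) (rB y)); pose proof (qdist2_ge0 (ra x) (ra y));
  pose proof (qdist2_ge0 (rb x) (rb y)); pose proof (qdist2_ge0 (rh x) (rh y)); pose proof (qdist2_ge0 (rw x) (rw y));
  pose proof (qdist2_ge0 (rA x) (rA y)); lra. Qed.
Lemma ra_cts S x : qcts rep rep_dist S x ra.
Proof. apply qcomp_le. intro y. pose proof (qdist2_ge0 (rB x) (rB y)); pose proof (qdist2_ge0 (ra x) (ra y));
  pose proof (qdist2_ge0 (rb x) (rb y)); pose proof (qdist2_ge0 (rh x) (rh y)); pose proof (qdist2_ge0 (rw x) (rw y));
  pose proof (qdist2_ge0 (rA x) (rA y)); lra. Qed.
Lemma rh_cts S x : qcts rep rep_dist S x rh.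
Proof. apply qcomp_le. intro y. pose proof (qdist2_ge0 (rB x) (rB y)); pose proof (qdist2_ge0 (ra x) (ra y));
  pose proof (qdist2_ge0 (rb x) (rb y)); pose proof (qdist2_ge0 (rh x) (rh y)); pose proof (qdist2_ge0 (rw x) (rw y));
  pose proof (qdist2_ge0 (rA x) (rA y)); lra. Qed.

Section Ph.
Variable eps : R.
Definition nuF (q : pt3) := eps * sqrt (px q ^ 2 + py q ^ 2).
Definition cnF (q : pt3) := cos (nuF q).
Definition SxF (q : pt3) := eps * sinc (nuF q) * px q.
Definition SyF (q : pt3) := eps * sinc (nuF q) * py q.
Definition CF (q : pt3) := sqrt (cnF q ^ 2 + SyF q ^ 2).
Definition hF (q : pt3) := Qt 0 (cnF q / CF q) 0 (- SyF q / CF q).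
Definition Phi (q : pt3) : rep :=
  Rep (qmul (hF q) (Qt (pz q) (px q) (py q) 0)) (Qt (cnF q) (SxF q) (SyF q) 0) kq
      (qopp (qmul (qmul (hF q) (qinv kq)) (qinv (hF q)))) (hF q) (qopp qone).
End Ph.

Lemma Phi_sph eps phi theta : 0 < eps -> 0 <= phi <= PI -> Phi eps (sph phi theta) = param eps phi theta.
Proof.
  intros He Hp. pose proof (sin_nonneg_range phi Hp) as Hs.
  assert (Es : sqrt (px (sph phi theta) ^ 2 + py (sph phi theta) ^ 2) = sin phi).
  { unfold px, py, sph; simpl.
    assert (K : sin theta ^2 + cos theta ^2 = 1) by (rewrite <- !Rsqr_pow2; apply sin2_cos2).
    apply sqrt_lem_1; auto.
    - pose proof (pow2_ge_0 (sin phi * cos theta)); pose proof (pow2_ge_0 (sin phi * sin theta)); simpl in *; lra.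
    - transitivity (sin phi ^ 2 * (sin theta ^2 + cos theta^2)); [rewrite K; ring| ring]. }
  assert (Ex : SxF eps (sph phi theta) = sin (eps * sin phi) * cos theta).
  { unfold SxF, nuF. rewrite Es. unfold px, sph; simpl. rewrite <- (sinc_prop eps (sin phi)) by lra. ring. }
  assert (Ey : SyF eps (sph phi theta) = sin (eps * sin phi) * sin theta).
  { unfold SyF, nuF. rewrite Es. unfold py, sph; simpl. rewrite <- (sinc_prop eps (sin phi)) by lra. ring. }
  assert (Ec : cnF eps (sph phi theta) = cos (eps * sin phi)).
  { unfold cnF, nuF. rewrite Es. reflexivity. }
  assert (EC : CF eps (sph phi theta) = Cc eps phi theta).
  { unfold CF, Cc. rewrite Ec, Ey. f_equal. ring. }
  assert (Eh : hF eps (sph phi theta) = hP eps phi theta).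
  { unfold hF. rewrite EC, Ec, Ey, hP_eq. reflexivity. }
  unfold Phi. rewrite Eh, Ec, Ex, Ey, param_eq. unfold QP, px, py, pz, sph. simpl. reflexivity.
Qed.

Section PhC.
Variable eps : R.
Hypothesis Heps : 0 < eps < 1.
Variable p : pt3.
Hypothesis Hp : in_S2 p.

Notation ctsS := (cts pt3 dist3 in_S2 p).
Notation qctsS := (qcts pt3 dist3 in_S2 p).

Lemma s_le1 : 0 <= px p ^ 2 + py p ^ 2 <= 1.
Proof. destruct p as [[a b] c]. unfold px, py, in_S2 in *; simpl in *.
  pose proof (pow2_ge_0 a); pose proof (pow2_ge_0 b); pose proof (pow2_ge_0 c). simpl in *. lra. Qed.

Lemma nu_small : 0 <= nuF eps p < 1.
Proof. unfold nuF. pose proof s_le1. assert (0 <= sqrt (px p ^ 2 + py p ^ 2) <= 1).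
  { split. apply sqrt_pos. rewrite <- sqrt_1. apply sqrt_le_1_alt. lra. } nra. Qed.

Lemma cnF_pos : 0 < cnF eps p.
Proof. unfold cnF. apply cos_pos_small, nu_small. Qed.

Lemma CF_pos : 0 < CF eps p.
Proof. unfold CF. apply sqrt_lt_R0. pose proof cnF_pos. pose proof (pow2_ge_0 (SyF eps p)). nra. Qed.

Lemma nuF_cts : ctsS (nuF eps).
Proof. unfold nuF. apply cts_mult. apply cts_const. apply cts_sqrt. apply cts_plus; apply cts_pow2; [apply px_cts|apply py_cts].
  pose proof s_le1; lra. Qed.

Lemma cnF_cts : ctsS (cnF eps).
Proof. unfold cnF. apply cts_cos, nuF_cts. Qed.

Lemma sincF_cts : ctsS (fun q => sinc (nuF eps q)).
Proof. apply (cts_comp _ _ _ _ sinc (nuF eps)). apply nuF_cts. apply sinc_cont. Qed.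

Lemma SxF_cts : ctsS (SxF eps).
Proof. unfold SxF. apply cts_mult; [apply cts_mult; [apply cts_const|apply sincF_cts]|apply px_cts]. Qed.
Lemma SyF_cts : ctsS (SyF eps).
Proof. unfold SyF. apply cts_mult; [apply cts_mult; [apply cts_const|apply sincF_cts]|apply py_cts]. Qed.

Lemma CF_cts : ctsS (CF eps).
Proof. unfold CF. apply cts_sqrt. apply cts_plus; apply cts_pow2; [apply cnF_cts|apply SyF_cts].
  pose proof (pow2_ge_0 (cnF eps p)); pose proof (pow2_ge_0 (SyF eps p)); lra. Qed.

Lemma hF_cts : qctsS (hF eps).
Proof. unfold hF. pose proof CF_pos.
  apply (qcts_Qt _ _ _ _ (fun _ => 0) (fun q => cnF eps q / CF eps q) (fun _ => 0) (fun q => - SyF eps q / CF eps q)).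
  apply cts_const. apply cts_div. apply cnF_cts. apply CF_cts. lra.
  apply cts_const. apply cts_div. apply cts_opp, SyF_cts. apply CF_cts. lra. Qed.

Lemma hF_n : qnorm2 (hF eps p) <> 0.
Proof. unfold hF, qnorm2; simpl. pose proof CF_pos. pose proof cnF_pos.
  assert (0 < cnF eps p / CF eps p) by (apply Rdiv_lt_0_compat; lra).
  pose proof (pow2_ge_0 (- SyF eps p / CF eps p)). simpl in *. nra. Qed.

Lemma Phi_cts : forall e, 0 < e -> Near pt3 dist3 in_S2 p (fun q => rep_dist (Phi eps p) (Phi eps q) < e).
Proof.
  apply (rep_close pt3 dist3 in_S2 p (Phi eps)); unfold Phi; cbn [rA rB ra rb rh rw].
  - apply (qcts_mul _ _ _ _ (hF eps) (fun q => Qt (pz q) (px q) (py q) 0)). apply hF_cts.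
    apply qcts_Qt. apply pz_cts. apply px_cts. apply py_cts. apply cts_const.
  - apply qcts_Qt. apply cnF_cts. apply SxF_cts. apply SyF_cts. apply cts_const.
  - apply qcts_const.
  - apply (qcts_opp _ _ _ _ (fun q => qmul (qmul (hF eps q) (qinv kq)) (qinv (hF eps q)))).
    apply (qcts_mul _ _ _ _ (fun q => qmul (hF eps q) (qinv kq)) (fun q => qinv (hF eps q))).
    apply (qcts_mul _ _ _ _ (hF eps) (fun _ => qinv kq)). apply hF_cts. apply qcts_const.
    apply qcts_inv. apply hF_cts. apply hF_n.
  - apply hF_cts.
  - apply qcts_const.
Qed.
End PhC.

Section PsiC.
Variable S : rep -> Prop.
Variable x : rep.
Hypothesis Hh : qnorm2 (rh x) <> 0.
Hypothesis HN : 0 < Nh x.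

Notation ctsR := (cts rep rep_dist S x).
Notation qctsR := (qcts rep rep_dist S x).

Lemma Qof_cts : qctsR Qof.
Proof. unfold Qof. apply (qcts_mul _ _ _ _ (fun y => qinv (rh y)) rA). apply qcts_inv. apply rh_cts. exact Hh. apply rA_cts. Qed.

Lemma hpq_cts : qctsR hpq.
Proof. unfold hpq, qadd.
  apply (qcts_add _ _ _ _ rh (fun y => qsc (q0 (qmul (rh y) (ra y))) (ra y))). apply rh_cts.
  unfold qsc. apply (qcts_sc _ _ _ _ (fun y => q0 (qmul (rh y) (ra y))) ra); [|apply ra_cts].
  apply (qcts_mul _ _ _ _ rh ra); [apply rh_cts|apply ra_cts]. Qed.

Lemma Nh_cts : ctsR Nh.
Proof. unfold Nh. apply (qcts_norm2 _ _ _ _ hpq). apply hpq_cts. Qed.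

Lemma sqN_cts : ctsR (fun y => sqrt (Nh y)).
Proof. apply (cts_sqrt _ _ _ _ Nh). apply Nh_cts. lra. Qed.

Lemma Psi_cts : forall e, 0 < e -> Near rep rep_dist S x (fun y => dist3 (Psi x) (Psi y) < e).
Proof.
  assert (Hs : sqrt (Nh x) <> 0) by (apply Rgt_not_eq, sqrt_lt_R0; lra).
  apply (pt3_close rep rep_dist S x (fun y => - I1 y / sqrt (Nh y)) (fun y => I2 y / sqrt (Nh y)) I0).
  - apply (cts_div _ _ _ _ (fun y => - I1 y)); [|apply sqN_cts|exact Hs].
    apply cts_opp. unfold I1. apply (qcts_mul _ _ _ _ Qof hpq). apply Qof_cts. apply hpq_cts.
  - apply (cts_div _ _ _ _ I2); [|apply sqN_cts|exact Hs].
    unfold I2. apply (qcts_mul _ _ _ _ Qof (fun y => qmul (ra y) (hpq y))). apply Qof_cts.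
    apply (qcts_mul _ _ _ _ ra hpq). apply ra_cts. apply hpq_cts.
  - unfold I0. apply Qof_cts.
Qed.
End PsiC.

Lemma sph_S2 phi theta : in_S2 (sph phi theta).
Proof. unfold in_S2, sph.
  assert (K : sin theta ^2 + cos theta ^2 = 1) by (rewrite <- !Rsqr_pow2; apply sin2_cos2).
  assert (K2 : sin phi ^2 + cos phi ^2 = 1) by (rewrite <- !Rsqr_pow2; apply sin2_cos2).
  transitivity (sin phi ^ 2 * (sin theta ^2 + cos theta^2) + cos phi ^ 2); [ring|]. rewrite K. lra. Qed.

Lemma sph_surj p : in_S2 p -> exists phi theta, in_coord_range phi theta /\ sph phi theta = p.
Proof.
  destruct p as [[a b] c]. unfold in_S2. intro H.
  assert (Hc : -1 <= c <= 1) by (pose proof (pow2_ge_0 a); pose proof (pow2_ge_0 b); nra).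
  set (phi := acos c).
  assert (Hp : 0 <= phi <= PI) by apply acos_bound.
  assert (Hc0 : cos phi = c) by (apply cos_acos; auto).
  assert (HS : sin phi ^ 2 = a^2 + b^2).
  { pose proof (sin2_cos2 phi). rewrite Hc0 in H0. rewrite <- Rsqr_pow2. unfold Rsqr in *. simpl in H. lra. }
  assert (HS0 : 0 <= sin phi) by (apply sin_nonneg_range; auto).
  pose proof PI_RGT_0.
  destruct (Req_dec (sin phi) 0) as [Z|Z].
  - exists phi, 0. split. split; auto. lra.
    assert (a = 0) by (rewrite Z in HS; pose proof (pow2_ge_0 a); pose proof (pow2_ge_0 b); nra).
    assert (b = 0) by (rewrite Z in HS; pose proof (pow2_ge_0 a); pose proof (pow2_ge_0 b); nra).
    subst a b. unfold sph. rewrite Z, Hc0. f_equal. f_equal. all: ring.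
  - destruct (angle (a / sin phi) (b / sin phi)) as [th [Hth [Hct [Hst _]]]].
    { field_simplify; auto. rewrite <- HS. field. auto. }
    exists phi, th. split. split; auto.
    unfold sph. rewrite Hct, Hst, Hc0. f_equal. f_equal. all: field; auto.
Qed.

Theorem theorem2p13 :
  exists eps0 : R, eps0 > 0 /\
  forall eps : R, 0 < eps < eps0 ->
    (forall phi theta, in_coord_range phi theta -> in_Rset eps (param eps phi theta)) /\
    (forall phi theta phi' theta', in_coord_range phi theta -> in_coord_range phi' theta' ->
       sph phi theta = sph phi' theta' ->
       rep_conj (param eps phi theta) (param eps phi' theta')) /\
    (forall phi theta phi' theta', in_coord_range phi theta -> in_coord_range phi' theta' ->
       rep_conj (param eps phi theta) (param eps phi' theta') ->
       sph phi theta = sph phi' theta') /\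
    (forall x, in_Rset eps x ->
       exists phi theta, in_coord_range phi theta /\ rep_conj x (param eps phi theta)) /\
    (forall W : rep -> Prop,
       open_in rep_dist (in_Rset eps) W -> saturated (in_Rset eps) rep_conj W ->
       open_in dist3 in_S2 (fun p => exists phi theta,
          in_coord_range phi theta /\ sph phi theta = p /\ W (param eps phi theta))) /\
    (forall U : pt3 -> Prop, open_in dist3 in_S2 U ->
       open_in rep_dist (in_Rset eps) (fun x => exists phi theta,
          in_coord_range phi theta /\ U (sph phi theta) /\ rep_conj x (param eps phi theta))).
Proof.
  exists 1. split; [lra|]. intros eps He.
  split; [|split; [|split; [|split; [|split]]]].
  - intros; apply param_in_Rset; auto.
  - intros phi theta phi' theta' [Hp _] [Hp' _] E.
    rewrite <- (Phi_sph eps phi theta), <- (Phi_sph eps phi' theta'), E by lra. apply rep_conj_refl.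
  - intros phi theta phi' theta' Hc Hc' Hr.
    rewrite <- (Psi_param eps phi theta He Hc), <- (Psi_param eps phi' theta' He Hc').
    symmetry. apply Psi_inv; auto. destruct Hc as [Hp _]. rewrite param_eq. cbn [rh]. rewrite hP_n by auto. lra.
  - intros; apply surj; auto.
  - intros W HW _ p Hp [phi [theta [Hc [Ep HWp]]]].
    destruct (HW _ (param_in_Rset eps phi theta He Hc) HWp) as [dW [HdW HWn]].
    destruct (Phi_cts eps He p Hp dW HdW) as [dl [Hdl Hn]].
    exists dl. split; auto. intros q Hq Hd.
    destruct (sph_surj q Hq) as [phi' [theta' [Hc' Eq]]].
    exists phi', theta'. split; auto. split; auto.
    apply HWn. apply param_in_Rset; auto.
    specialize (Hn q Hq Hd). subst p q. destruct Hc as [Hp1 _]. destruct Hc' as [Hp1' _].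
    rewrite !Phi_sph in Hn by lra. exact Hn.
  - intros U HU x Hx [phi [theta [Hc [HUp Hr]]]].
    assert (Hhx : qnorm2 (rh x) <> 0).
    { destruct Hx as [_ [_ [_ [_ [Hh _]]]]]. apply su2_nz; auto. }
    assert (EPx : Psi x = sph phi theta).
    { rewrite <- (Psi_param eps phi theta He Hc). symmetry. apply Psi_inv; auto. }
    assert (HNx : 0 < Nh x).
    { rewrite <- (Nh_inv x _ Hr), Nh_param. pose proof (hP_x_pos eps phi theta He (proj1 Hc)). nra. }
    destruct (HU _ (sph_S2 phi theta) HUp) as [dU [HdU HUn]].
    destruct (Psi_cts (in_Rset eps) x Hhx HNx dU HdU) as [dl [Hdl Hn]].
    exists dl. split; auto. intros y Hy Hd.
    destruct (surj eps y He Hy) as [phi' [theta' [Hc' Hr']]].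
    exists phi', theta'. split; auto. split; auto.
    apply HUn. apply sph_S2.
    specialize (Hn y Hy Hd). rewrite EPx in Hn.
    assert (Hhy : qnorm2 (rh y) <> 0).
    { destruct Hy as [_ [_ [_ [_ [Hh _]]]]]. apply su2_nz; auto. }
    rewrite <- (Psi_param eps phi' theta' He Hc'). rewrite (Psi_inv y _ Hr' Hhy). exact Hn.
Qed.
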